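(* Let $\mathcal{S}:\mathbb{Z}\to\{L,R\}$ be a periodic symbol sequence of period $n$ with $\mathcal{S}_0=L$, and suppose $\mathcal{S}^{\overline0\,\overline\alpha\,(d)}=\mathcal{S}$ for some $1\le\alpha\le n-1$ and $1\le d\le n-1$ with $\gcd(d,n)=1$. Let $m$ denote the multiplicative inverse of $d$ modulo $n$, and $\ell=m\alpha\bmod n$. Then $\mathcal{S}=\mathcal{F}[\ell,m,n]$ and $\alpha=\ell d\bmod n$.
   Context: For a sequence $\mathcal{S}$ of period $n$: $\mathcal{S}^{\overline j}$ is the sequence differing from $\mathcal{S}$ exactly at indices $\equiv j\pmod n$, and $\mathcal{S}^{(j)}$ is the $j$-th left shift, $\mathcal{S}^{(j)}_i=\mathcal{S}_{i+j}$; superscript operations are applied left to right (so $\mathcal{S}^{\overline0\,\overline\alpha\,(d)}$ is the $d$-th left shift of the sequence obtained from $\mathcal{S}$ by changing the symbols at indices $\equiv0$ and $\equiv\alpha$). For positive integers $\ell<n$, $m<n$, $\gcd(m,n)=1$, $\mathcal{F}[\ell,m,n]_i=L$ if $im\bmod n<\ell$ and $R$ otherwise. *)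

(* Defs.v *)
From mathcomp Require Import all_boot all_order all_algebra.
Set Implicit Arguments. Unset Strict Implicit. Unset Printing Implicit Defensive.
Import Order.TTheory GRing.Theory Num.Theory.
Local Open Scope ring_scope.

Inductive sym := L | R.

Definition sym_flip (s : sym) : sym := if s is L then R else L.

Definition symseq := int -> sym.

Definition periodic (n : nat) (S : symseq) : Prop :=
  forall i : int, S (i + n%:Z) = S i.

Definition flip_at (n : nat) (j : int) (S : symseq) : symseq :=
  fun i => if ((i - j) %% n%:Z)%Z == 0 then sym_flip (S i) else S i.

Definition seq_lshift (j : int) (S : symseq) : symseq := fun i => S (i + j).

Definition Fseq (l m n : nat) : symseq :=
  fun i => if ((i * m%:Z) %% n%:Z)%Z < l%:Z then L else R.

(* Main.v *)
Require Import Defs.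
From mathcomp Require Import all_boot all_order all_algebra zify.
Import Order.TTheory GRing.Theory Num.Theory.
Local Open Scope ring_scope.

Lemma mulinv (n d m x y : nat) : ((d * m) %% n = 1)%N ->
  (x * d = y %[mod n])%N -> (x = y * m %[mod n])%N.
Proof.
move=> Hdm Hx.
rewrite -[x in LHS]muln1 -Hdm modnMmr mulnA -modnMml Hx modnMml //.
Qed.

Lemma mulinv2 (n d m y : nat) : ((d * m) %% n = 1)%N ->
  ((y * m %% n) * d = y %[mod n])%N.
Proof.
move=> Hdm.
by rewrite modnMml -mulnA [(m * d)%N]mulnC -modnMmr Hdm muln1.
Qed.

Lemma flipz (n x a : nat) :
  ((x%:Z - a%:Z) %% n%:Z == 0)%Z = (x == a %[mod n])%N.
Proof.
apply/idP/idP.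
- move/eqP/dvdz_mod0P; rewrite -eqz_mod_dvd !modz_nat. move/eqP. case. move=>->. done.
- move/eqP=> h; apply/eqP/dvdz_mod0P; rewrite -eqz_mod_dvd !modz_nat h //.
Qed.

Lemma per_nat (n : nat) (S : symseq) : periodic n S ->
  forall (k : nat) x, S (x + (k%:Z * n%:Z)) = S x.
Proof.
move=> P; elim=> [|k IH] x; first by rewrite mul0r addr0.
have -> : x + (k.+1%:Z * n%:Z) = (x + k%:Z * n%:Z) + n%:Z by lia.
by rewrite P IH.
Qed.

Lemma per_mod (n : nat) (S : symseq) : periodic n S ->
  forall i, S i = S ((i %% n%:Z)%Z).
Proof.
move=> P i.
rewrite {1}(divz_eq i n); case: (i %/ n)%Z => k.
- by rewrite addrC (@per_nat n S P).
- rewrite -(@per_nat n S P k.+1 (_ * _ + _)). congr S. rewrite NegzE. lia.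
Qed.

From Stdlib Require Import FunctionalExtensionality.

Theorem proposition5p1 (n : nat) (S : symseq) (alpha d m : nat) :
  periodic n S -> S 0 = L ->
  (1 <= alpha <= n - 1)%N -> (1 <= d <= n - 1)%N -> coprime d n ->
  seq_lshift (Posz d) (flip_at n (Posz alpha) (flip_at n 0 S)) = S ->
  (m < n)%N -> ((d * m) %% n = 1)%N ->
  let l := ((m * alpha) %% n)%N in
  S = Fseq l m n /\ alpha = ((l * d) %% n)%N.
Proof.
move=> P S0 Ha Hd _ H Hm Hdm l.
have n2 : (1 < n)%N by lia.
have Hpt i : S i = flip_at n alpha (flip_at n 0 S) (i + d%:Z).
  by rewrite -{1}H.
have Hal : alpha = ((l * d) %% n)%N.
  have := @mulinv2 n d m alpha Hdm; rewrite /l [(m * alpha)%N]mulnC => ->; rewrite modn_small //; lia.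
have Hl0 : (0 < l)%N.
  rewrite lt0n; apply/negP => /eqP E; move: Hal; rewrite E mul0n mod0n; lia.
have Hln : (l < n)%N by rewrite /l ltn_mod; lia.
have Hmain : forall k, (k < n)%N -> S (k * d)%N%:Z = if (k < l)%N then L else R.
  elim=> [|k IH] Hk; first by rewrite mul0n S0 Hl0.
  have := Hpt (k * d)%N%:Z.
  rewrite /flip_at.
  have -> : (k * d)%N%:Z + d%:Z = (k.+1 * d)%N%:Z by rewrite mulSnr PoszD.
  have -> : ((k.+1 * d)%N%:Z - 0 = (k.+1 * d)%N%:Z - 0%N%:Z) by [].
  rewrite !flipz.
  have -> : (k.+1 * d == 0 %[mod n])%N = false.
    apply/negP => /eqP /(@mulinv n d m _ _ Hdm); rewrite mul0n mod0n modn_small //; lia.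
  have -> : (k.+1 * d == alpha %[mod n])%N = (k.+1 == l).
    apply/idP/idP.
    - move=> /eqP /(@mulinv n d m _ _ Hdm); rewrite modn_small // mulnC => ->. by [].
    - move=> /eqP ->; apply/eqP; rewrite -Hal modn_small; [by rewrite Hal | lia].
  rewrite IH; last lia.
  case: (ltngtP k.+1 l) => Hkl.
  1-3: case: (S (k.+1 * d)%N%:Z) => //=.
split=> //.
apply: functional_extensionality => i.
have nz : n%:Z != 0 by lia.
have g0 := modz_ge0 (i * m%:Z) nz.
have lt : ((i * m%:Z) %% n%:Z < n%:Z)%Z by apply: ltz_pmod; lia.
set q := ((i * m%:Z) %% n%:Z)%Z in g0 lt *.
have [k Hk] : exists k : nat, k%:Z = q by exists `|q|%N; rewrite gez0_abs.
have Hkn : (k < n)%N by rewrite -ltz_nat Hk.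
have E : S i = S (k * d)%N%:Z.
  rewrite (@per_mod n S P i) (@per_mod n S P (k * d)%N%:Z); congr S.
  rewrite PoszM Hk /q.
  have H1 : ((m%:Z * d%:Z) %% n%:Z)%Z = 1.
    by rewrite -PoszM modz_nat mulnC Hdm.
  rewrite modzMml -mulrA -modzMmr H1 mulr1 //.
rewrite E Hmain // /Fseq -/q -Hk ltz_nat //.
Qed.
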